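(* Let $L>0$, $\epsilon>0$, $x\in\mathbb{R}$, and set $t=\sqrt{2\epsilon/L}$. Suppose $f,g:[x-t,x+t]\to\mathbb{R}$ are such that (a) $g$ is concave and differentiable on $[x-t,x+t]$, (b) $f'$ exists and is $L$-Lipschitz on $[x-t,x+t]$, and (c) $|f(a)-g(a)|\le\epsilon$ for all $a\in\{x-t,x,x+t\}$. Then $|f'(x)-g'(x)|\le2\sqrt{2L\epsilon}$. *)

(* Defs.v *)
From Stdlib Require Import Reals Lra.
Open Scope R_scope.

Definition has_deriv_within (a b : R) (f : R -> R) (y l : R) : Prop :=
  forall e : R, 0 < e -> exists d : R, 0 < d /\
    forall z : R, a <= z <= b -> z <> y -> Rabs (z - y) < d ->
      Rabs ((f z - f y) / (z - y) - l) <= e.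

Definition concave_on (a b : R) (g : R -> R) : Prop :=
  forall u v lam : R, a <= u <= b -> a <= v <= b -> 0 <= lam <= 1 ->
    lam * g u + (1 - lam) * g v <= g (lam * u + (1 - lam) * v).

Definition lipschitz_on (a b L : R) (h : R -> R) : Prop :=
  forall u v : R, a <= u <= b -> a <= v <= b -> Rabs (h u - h v) <= L * Rabs (u - v).

(* Main.v *)
Require Import Defs.
From Stdlib Require Import Reals Lra Classical.
Open Scope R_scope.

Lemma Rabs_le_between' x y z : Rabs (x - y) <= z -> y - z <= x <= y + z.
Proof. intros H. unfold Rabs in H. destruct (Rcase_abs (x - y)); lra. Qed.

Lemma qpos A B l e : 0 < B -> Rabs (A/B - l) <= e -> (l-e)*B <= A <= (l+e)*B.
Proof.
  intros HB H. apply Rabs_le_between' in H.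
  assert (A = (A/B)*B) by (field; lra).
  set (q := A/B) in *. rewrite H0. split; nra.
Qed.

Lemma qneg A B l e : B < 0 -> Rabs (A/B - l) <= e -> (l+e)*B <= A <= (l-e)*B.
Proof.
  intros HB H. apply Rabs_le_between' in H.
  assert (A = (A/B)*B) by (field; lra).
  set (q := A/B) in *. rewrite H0. split; nra.
Qed.

Lemma mvt_upper a b h h' c d M : a <= c -> c < d -> d <= b ->
  (forall y, c <= y <= d -> has_deriv_within a b h y (h' y)) ->
  (forall y, c <= y <= d -> h' y <= M) -> h d - h c <= M*(d-c).
Proof.
  intros Hac Hcd Hdb Hder HM.
  apply Rnot_lt_le; intro Hc.
  set (del := (h d - h c - M*(d-c))/(2*(d-c))).
  assert (Hdel : 0 < del) by (unfold del; apply Rdiv_lt_0_compat; lra).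
  set (K := M + del).
  assert (HK : K*(d-c) < h d - h c).
  { unfold K, del. replace ((M + (h d - h c - M * (d - c)) / (2 * (d - c))) * (d - c))
      with (M*(d-c) + (h d - h c - M*(d-c))/2) by (field; lra). lra. }
  set (E := fun s => c <= s <= d /\ forall u, c <= u <= s -> h u - h c <= K*(u-c)).
  assert (Eb : bound E). { exists d. intros s [Hs _]. lra. }
  assert (Ec : exists s, E s). { exists c. split. lra. intros u Hu.
    replace u with c by lra. lra. }
  destruct (completeness E Eb Ec) as [s0 [Hub Hlub]].
  assert (Hcs0 : c <= s0). { apply Hub. destruct Ec. split. lra. intros u Hu.
    replace u with c by lra. lra. }
  assert (Hs0d : s0 <= d). { apply Hlub. intros s [Hs _]. lra. }
  assert (P : forall u, c <= u < s0 -> h u - h c <= K*(u-c)).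
  { intros u Hu. destruct (classic (exists s, E s /\ u < s)) as [[s [[Hs1 Hs2] Hus]]|Hn].
    - apply Hs2. lra.
    - exfalso. assert (s0 <= u). { apply Hlub. intros s Es. apply Rnot_lt_le. intro.
        apply Hn. eauto. } lra. }
  assert (Q : h s0 - h c <= K*(s0-c)).
  { destruct (Req_dec s0 c) as [e|ne]. { rewrite e. lra. }
    destruct (Hder s0 (conj Hcs0 Hs0d) del Hdel) as [d0 [Hd0 Hq]].
    set (z := Rmax c (s0 - d0/2)).
    assert (Hz1 : c <= z) by (unfold z; apply Rmax_l).
    assert (Hz2 : s0 - d0/2 <= z) by (unfold z; apply Rmax_r).
    assert (Hz3 : z < s0) by (unfold z; apply Rmax_lub_lt; lra).
    assert (Hq' := Hq z ltac:(lra) ltac:(lra) ltac:(rewrite Rabs_left; lra)).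
    apply qneg in Hq'; [|lra].
    assert (HM0 := HM s0 (conj Hcs0 Hs0d)).
    assert (P0 := P z (conj Hz1 Hz3)).
    assert (0 <= (M - h' s0) * (s0 - z)) by (apply Rmult_le_pos; lra).
    unfold K in *. nra. }
  assert (Hs0 : s0 = d).
  { destruct (Req_dec s0 d) as [e|ne]; auto. exfalso.
    destruct (Hder s0 (conj Hcs0 Hs0d) del Hdel) as [d0 [Hd0 Hq]].
    set (s1 := Rmin d (s0 + d0/2)).
    assert (H1 : s1 <= d) by (unfold s1; apply Rmin_l).
    assert (H2 : s1 <= s0 + d0/2) by (unfold s1; apply Rmin_r).
    assert (H3 : s0 < s1) by (unfold s1; apply Rmin_glb_lt; lra).
    assert (E s1).
    { split. lra. intros u Hu.
      destruct (Rtotal_order u s0) as [Hl|[He|Hg]].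
      - apply P. lra.
      - rewrite He. exact Q.
      - assert (Hq' := Hq u ltac:(lra) ltac:(lra) ltac:(rewrite Rabs_right; lra)).
        apply qpos in Hq'; [|lra].
        assert (HM0 := HM s0 (conj Hcs0 Hs0d)).
        assert (0 <= (M - h' s0) * (u - s0)) by (apply Rmult_le_pos; lra).
        unfold K in *. nra. }
    assert (s1 <= s0) by (apply Hub; auto). lra. }
  rewrite Hs0 in Q. lra.
Qed.

Lemma deriv_opp a b h y l : has_deriv_within a b h y l ->
  has_deriv_within a b (fun z => - h z) y (- l).
Proof.
  intros H e He. destruct (H e He) as [d [Hd H']]. exists d. split; auto.
  intros z Hz Hzy Hzd.
  assert (z - y <> 0) by (intro; apply Hzy; lra).
  replace ((- h z - - h y)/(z-y) - - l) with (-((h z - h y)/(z-y) - l)) by (field; auto).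
  rewrite Rabs_Ropp; auto.
Qed.

Lemma mvt_lower a b h h' c d m : a <= c -> c < d -> d <= b ->
  (forall y, c <= y <= d -> has_deriv_within a b h y (h' y)) ->
  (forall y, c <= y <= d -> m <= h' y) -> m*(d-c) <= h d - h c.
Proof.
  intros H1 H2 H3 Hd Hm.
  assert (X := mvt_upper a b (fun z => - h z) (fun z => - h' z) c d (-m) H1 H2 H3
    (fun y Hy => deriv_opp _ _ _ _ _ (Hd y Hy)) (fun y Hy => Ropp_le_contravar _ _ (Hm y Hy))).
  simpl in X. lra.
Qed.

Lemma conc_right x t g l : 0 < t -> concave_on (x - t) (x + t) g ->
  has_deriv_within (x - t) (x + t) g x l -> g (x+t) - g x <= l * t.
Proof.
  intros Ht Hc Hd. apply Rnot_lt_le; intro Hn.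
  set (G := g (x+t) - g x) in *.
  set (e := (G - l*t)/(2*t)).
  assert (He : 0 < e) by (unfold e; apply Rdiv_lt_0_compat; lra).
  assert (Het : e * t = (G - l*t)/2) by (unfold e; field; lra).
  destruct (Hd e He) as [d0 [Hd0 Hq]].
  set (s := Rmin (d0/2) t).
  assert (Hs1 : s <= d0/2) by (unfold s; apply Rmin_l).
  assert (Hs2 : s <= t) by (unfold s; apply Rmin_r).
  assert (Hs3 : 0 < s) by (unfold s; apply Rmin_glb_lt; lra).
  set (lam := s/t).
  assert (Hlt : lam * t = s) by (unfold lam; field; lra).
  assert (Hl0 : 0 < lam) by (unfold lam; apply Rdiv_lt_0_compat; lra).
  assert (Hl1 : lam <= 1) by nra.
  assert (Hcc := Hc (x+t) x lam ltac:(lra) ltac:(lra) ltac:(lra)).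
  replace (lam * (x + t) + (1 - lam) * x) with (x + s) in Hcc by nra.
  assert (Hq' := Hq (x+s) ltac:(lra) ltac:(lra)
     ltac:(replace (x+s-x) with s by ring; rewrite Rabs_right; lra)).
  apply qpos in Hq'; [|lra].
  replace (x + s - x) with s in Hq' by ring.
  assert (lam * G <= lam * ((l + e) * t)) by (unfold G; nra).
  apply Rmult_le_reg_l in H; auto. nra.
Qed.

Lemma conc_left x t g l : 0 < t -> concave_on (x - t) (x + t) g ->
  has_deriv_within (x - t) (x + t) g x l -> l * t <= g x - g (x - t).
Proof.
  intros Ht Hc Hd. apply Rnot_lt_le; intro Hn.
  set (G := g x - g (x - t)) in *.
  set (e := (l*t - G)/(2*t)).
  assert (He : 0 < e) by (unfold e; apply Rdiv_lt_0_compat; lra).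
  assert (Het : e * t = (l*t - G)/2) by (unfold e; field; lra).
  destruct (Hd e He) as [d0 [Hd0 Hq]].
  set (s := Rmin (d0/2) t).
  assert (Hs1 : s <= d0/2) by (unfold s; apply Rmin_l).
  assert (Hs2 : s <= t) by (unfold s; apply Rmin_r).
  assert (Hs3 : 0 < s) by (unfold s; apply Rmin_glb_lt; lra).
  set (lam := s/t).
  assert (Hlt : lam * t = s) by (unfold lam; field; lra).
  assert (Hl0 : 0 < lam) by (unfold lam; apply Rdiv_lt_0_compat; lra).
  assert (Hl1 : lam <= 1) by nra.
  assert (Hcc := Hc (x-t) x lam ltac:(lra) ltac:(lra) ltac:(lra)).
  replace (lam * (x - t) + (1 - lam) * x) with (x - s) in Hcc by nra.
  assert (Hq' := Hq (x-s) ltac:(lra) ltac:(lra)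
     ltac:(replace (x-s-x) with (-s) by ring; rewrite Rabs_left; lra)).
  apply qneg in Hq'; [|lra].
  replace (x - s - x) with (-s) in Hq' by ring.
  assert (lam * ((l - e) * t) <= lam * G) by (unfold G; nra).
  apply Rmult_le_reg_l in H; auto. nra.
Qed.

Theorem lemma8 (L eps x : R) (f g df dg : R -> R) :
  0 < L -> 0 < eps ->
  let t := sqrt (2 * eps / L) in
  (* (a) g concave and differentiable on [x-t, x+t], with derivative dg *)
  concave_on (x - t) (x + t) g ->
  (forall y, x - t <= y <= x + t -> has_deriv_within (x - t) (x + t) g y (dg y)) ->
  (* (b) f' = df exists on [x-t, x+t] and is L-Lipschitz there *)
  (forall y, x - t <= y <= x + t -> has_deriv_within (x - t) (x + t) f y (df y)) ->
  lipschitz_on (x - t) (x + t) L df ->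
  (* (c) *)
  Rabs (f (x - t) - g (x - t)) <= eps ->
  Rabs (f x - g x) <= eps ->
  Rabs (f (x + t) - g (x + t)) <= eps ->
  Rabs (df x - dg x) <= 2 * sqrt (2 * L * eps).
Proof.
  intros HL He t Hc Hg Hf Hlip H1 H2 H3.
  assert (Ht : 0 < t) by (unfold t; apply sqrt_lt_R0; apply Rdiv_lt_0_compat; lra).
  assert (Ht2 : L * (t * t) = 2 * eps).
  { unfold t. rewrite sqrt_sqrt. field; lra. apply Rlt_le, Rdiv_lt_0_compat; lra. }
  assert (HK : 2 * sqrt (2 * L * eps) * t = 4 * eps).
  { unfold t. rewrite Rmult_assoc, <- sqrt_mult by (try apply Rlt_le, Rdiv_lt_0_compat; nra).
    replace (2 * L * eps * (2 * eps / L)) with ((2*eps)^2) by (field; lra).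
    rewrite sqrt_pow2; lra. }
  assert (Hlb : forall y, x - t <= y <= x + t -> Rabs (df y - df x) <= L * t).
  { intros y Hy. eapply Rle_trans. apply Hlip; lra.
    apply Rmult_le_compat_l; [lra|]. apply Rabs_le; lra. }
  assert (FR1 : f (x+t) - f x <= (df x + L*t) * (x + t - x)).
  { apply (mvt_upper (x-t) (x+t) f df); try lra.
    intros; apply Hf; lra. intros y Hy. assert (Z := Hlb y ltac:(lra)).
    apply Rabs_le_between' in Z. lra. }
  assert (FR2 : (df x - L*t) * (x + t - x) <= f (x+t) - f x).
  { apply (mvt_lower (x-t) (x+t) f df); try lra.
    intros; apply Hf; lra. intros y Hy. assert (Z := Hlb y ltac:(lra)).
    apply Rabs_le_between' in Z. lra. }
  assert (FL1 : f x - f (x-t) <= (df x + L*t) * (x - (x - t))).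
  { apply (mvt_upper (x-t) (x+t) f df); try lra.
    intros; apply Hf; lra. intros y Hy. assert (Z := Hlb y ltac:(lra)).
    apply Rabs_le_between' in Z. lra. }
  assert (FL2 : (df x - L*t) * (x - (x - t)) <= f x - f (x-t)).
  { apply (mvt_lower (x-t) (x+t) f df); try lra.
    intros; apply Hf; lra. intros y Hy. assert (Z := Hlb y ltac:(lra)).
    apply Rabs_le_between' in Z. lra. }
  assert (Hgx : has_deriv_within (x - t) (x + t) g x (dg x)) by (apply Hg; lra).
  assert (GR := conc_right x t g (dg x) Ht Hc Hgx).
  assert (GL := conc_left x t g (dg x) Ht Hc Hgx).
  apply Rabs_le_between' in H1. apply Rabs_le_between' in H2. apply Rabs_le_between' in H3.
  replace (x + t - x) with t in * by ring.
  replace (x - (x - t)) with t in * by ring.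
  assert (A1 : (df x - dg x) * t <= 4 * eps) by nra.
  assert (A2 : (dg x - df x) * t <= 4 * eps) by nra.
  rewrite <- HK in A1, A2.
  apply Rabs_le; split.
  - assert (dg x - df x <= 2 * sqrt (2 * L * eps)) by (eapply Rmult_le_reg_r; eauto). lra.
  - eapply Rmult_le_reg_r; eauto.
Qed.
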